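(* Consider an economy of $N$ companies indexed by $i$, with parameters $\pi^0_i,\pi^1_i,\gamma_i>0$, and set $\mathrm{E}^{\mathrm{bau}}_i=\pi^0_i/\pi^1_i$, $\mathcal{W}^{\mathrm{bau}}_{\mathrm{C},i}=(\pi^0_i)^2/(2\pi^1_i)$, $\varrho_i=1/\pi^1_i+1/\gamma_i$, $\mathrm{E}^{\mathrm{bau}}=\sum_i\mathrm{E}^{\mathrm{bau}}_i$, $\mathcal{W}^{\mathrm{bau}}_{\mathrm{C}}=\sum_i\mathcal{W}^{\mathrm{bau}}_{\mathrm{C},i}$, $\varrho=\sum_i\varrho_i$. Let $A>0$ be the number of certificates auctioned, $\lambda>0$ the penalty rate and $\tau>0$ the tax rate, with $\tau\varrho_i<\mathrm{E}^{\mathrm{bau}}_i$ and $\lambda\varrho_i<\mathrm{E}^{\mathrm{bau}}_i$ for all $i$. Assume that $\tau$ and $\lambda$ are chosen such that the aggregate emissions are identical across all policy schemes, i.e. equal to $A$. Then: (1) Tax scheme: $\tau=(\mathrm{E}^{\mathrm{bau}}-A)/\varrho$, the wealth of company $i$ is $\mathcal{W}^{\mathrm{tax}}_{\mathrm{C},i}=\mathcal{W}^{\mathrm{bau}}_{\mathrm{C},i}-\tau\big(\mathrm{E}^{\mathrm{bau}}_i-\tfrac{\tau}{2}\varrho_i\big)$, the aggregate wealth of the companies is $\mathcal{W}^{\mathrm{tax}}_{\mathrm{C}}=\mathcal{W}^{\mathrm{bau}}_{\mathrm{C}}-\tau\big(\mathrm{E}^{\mathrm{bau}}-\tfrac{\tau}{2}\varrho\big)$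 and the wealth of the regulator is $\mathcal{W}^{\mathrm{tax}}_{\mathrm{R}}=\tau A$. (2) Spot market scheme (assuming $\mathrm{E}^{\mathrm{bau}}-\lambda\varrho\le A<\mathrm{E}^{\mathrm{bau}}$): outcomes are identical to the tax scheme: $\mathcal{W}^{\mathrm{mar}}_{\mathrm{C},i}=\mathcal{W}^{\mathrm{tax}}_{\mathrm{C},i}$ for every $i$, $\mathcal{W}^{\mathrm{mar}}_{\mathrm{C}}=\mathcal{W}^{\mathrm{tax}}_{\mathrm{C}}$ and $\mathcal{W}^{\mathrm{mar}}_{\mathrm{R}}=\mathcal{W}^{\mathrm{tax}}_{\mathrm{R}}$. (3) Purely intermediated market scheme (assuming $\tfrac12\big[\mathrm{E}^{\mathrm{bau}}+\varrho\big(\max_i(\mathrm{E}^{\mathrm{bau}}_i/\varrho_i)-2\lambda\big)\big]\le A<\sum_i\big[(\mathrm{E}^{\mathrm{bau}}_i/2)\vee(\mathrm{E}^{\mathrm{bau}}_i-\lambda\varrho_i)\big]$): the optimal intermediated price faced by company $i$ at the equilibrium spot price $\bm S$ is $\bm{P_i}(\bm S)=\tfrac{\tau}{2}+\tfrac12\big(\mathrm{E}^{\mathrm{bau}}_i/\varrho_i-A/\varrho\big)$; the wealth of the intermediary serving company $i$ and of company $i$ are $$\mathcal{W}^{\mathrm{mar}}_{\mathrm{F},i}=\frac{(\mathrm{E}^{\mathrm{mar}}_i)^2}{\varrho_i}=\frac{\varrho_i}{4}\Big(\frac{\mathrm{E}^{\mathrm{bau}}_i}{\varrho_i}-\frac{\mathrm{E}^{\mathrm{bau}}}{\varrho}+\frac{2A}{\varrho}\Big)^2,\qquad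 \mathcal{W}^{\mathrm{mar}}_{\mathrm{C},i}=\mathcal{W}^{\mathrm{tax}}_{\mathrm{C},i}-\frac32\mathcal{W}^{\mathrm{mar}}_{\mathrm{F},i}+\frac{A\varrho_i}{\varrho}\Big(\frac{\mathrm{E}^{\mathrm{bau}}_i}{\varrho_i}-\frac{\mathrm{E}^{\mathrm{bau}}}{\varrho}+\frac{3A}{2\varrho}\Big),$$ and the aggregates satisfy $\mathcal{W}^{\mathrm{mar}}_{\mathrm{F}}=\sum_i(\mathrm{E}^{\mathrm{mar}}_i)^2/\varrho_i$, $\mathcal{W}^{\mathrm{mar}}_{\mathrm{C}}=\mathcal{W}^{\mathrm{tax}}_{\mathrm{C}}-\tfrac32\mathcal{W}^{\mathrm{mar}}_{\mathrm{F}}+\tfrac{3}{2\varrho}A^2$ and $\mathcal{W}^{\mathrm{mar}}_{\mathrm{R}}=\mathcal{W}^{\mathrm{tax}}_{\mathrm{R}}-A^2/\varrho$.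
   Context: Company $i$ producing $q$ units has raw wealth $\pi_i(q)=\pi^0_iq-\tfrac{\pi^1_i}{2}q^2$; its emissions are $q$, reduced to $e^{-a}q$ by green effort $a$ at cost $c_i(q,a)=\tfrac{\gamma_i}{2}[(1-e^{-a})q]^2$. Under the tax scheme with rate $\tau$, company $i$ maximizes $\pi_i(q)-c_i(q,a)-\tau e^{-a}q$ over $(q,a)$ (subject to positive production and wealth); its emissions at the optimum are $\mathrm{E}^{\mathrm{tax}}_i=e^{-a}q$ and its optimal wealth is $\mathcal{W}^{\mathrm{tax}}_{\mathrm{C},i}$; aggregate emissions are $\mathrm{E}^{\mathrm{tax}}=\sum_i\mathrm{E}^{\mathrm{tax}}_i$, and the regulator collects $\mathcal{W}^{\mathrm{tax}}_{\mathrm{R}}=\tau\,\mathrm{E}^{\mathrm{tax}}$. Under the market scheme, company $i$ facing a certificate price $P_i\in(0,\lambda)$ maximizes $\pi_i(q)-c_i(q,a)-\delta P_i-\lambda(e^{-a}q-\delta)^+$ over $(q,a,\delta)$; its optimal certificate demand is $\delta_i(P)=\mathrm{E}^{\mathrm{bau}}_i-P\varrho_i$, its emissions are $\mathrm{E}^{\mathrm{mar}}_i=e^{-a}q$ and its optimal wealth is $\mathcal{W}^{\mathrm{mar}}_{\mathrm{C},i}$. The regulator auctions $A$ certificates at a spot price $S$. In the spot market scheme, every company buys directly at the auction, so $P_i=S$. In the purely intermediated market scheme, every company buys from its own financial intermediary, which buys at the auction at price $S$ and sets the price $\bm{P_i}(S)$ maximizing $\delta_i(P)(P-S)$ over $P\in[S,\lambda]$;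 the intermediary's wealth is $\mathcal{W}^{\mathrm{mar}}_{\mathrm{F},i}=\delta_i(\bm{P_i})(\bm{P_i}-S)$. The equilibrium spot price $\bm S$ is determined by clearing $A=\sum_i\delta_i(\bm{P_i}(\bm S))$. The regulator's market wealth is $\mathcal{W}^{\mathrm{mar}}_{\mathrm{R}}=\lambda\sum_i(\mathrm{E}^{\mathrm{mar}}_i-\bm{\delta_i})^++\bm S A$. Aggregates without index $i$ are sums over $i$. $x\vee y=\max(x,y)$. *)

(* Defs.v *)
From HB Require Import structures.
From mathcomp Require Import all_boot all_order all_algebra.
From mathcomp Require Import all_classical all_reals all_analysis.
Set Implicit Arguments. Unset Strict Implicit. Unset Printing Implicit Defensive.
Import Order.TTheory GRing.Theory Num.Theory.
Local Open Scope ring_scope.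

Section Model.
Context {R : realType}.

Definition raw_wealth (p0 p1 q : R) : R := p0 * q - p1 / 2 * q ^+ 2.
Definition abate_cost (g q a : R) : R := g / 2 * ((1 - expR (- a)) * q) ^+ 2.
Definition emissions (q a : R) : R := expR (- a) * q.

Definition tax_obj (p0 p1 g tau q a : R) : R :=
  raw_wealth p0 p1 q - abate_cost g q a - tau * emissions q a.

Definition tax_optimal (p0 p1 g tau q a : R) : Prop :=
  [/\ 0 < q, 0 <= a, 0 < tax_obj p0 p1 g tau q a &
    forall q' a', 0 < q' -> 0 <= a' -> 0 < tax_obj p0 p1 g tau q' a' ->
      tax_obj p0 p1 g tau q' a' <= tax_obj p0 p1 g tau q a].

Definition mar_obj (p0 p1 g lam P q a d : R) : R :=
  raw_wealth p0 p1 q - abate_cost g q a - d * P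
  - lam * Num.max 0 (emissions q a - d).

Definition mar_optimal (p0 p1 g lam P q a d : R) : Prop :=
  [/\ 0 < q, 0 <= a, 0 <= d, 0 < mar_obj p0 p1 g lam P q a d &
    forall q' a' d', 0 < q' -> 0 <= a' -> 0 <= d' ->
      0 < mar_obj p0 p1 g lam P q' a' d' ->
      mar_obj p0 p1 g lam P q' a' d' <= mar_obj p0 p1 g lam P q a d].

Definition Ebau (p0 p1 : R) : R := p0 / p1.
Definition Wbau (p0 p1 : R) : R := p0 ^+ 2 / (2 * p1).
Definition varrho (p1 g : R) : R := p1^-1 + g^-1.

Definition demand (p0 p1 g P : R) : R := Ebau p0 p1 - P * varrho p1 g.

Definition interm_obj (p0 p1 g S P : R) : R := demand p0 p1 g P * (P - S).
Definition interm_optimal (p0 p1 g lam S P : R) : Prop :=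
  S <= P <= lam /\
  forall P', S <= P' <= lam -> interm_obj p0 p1 g S P' <= interm_obj p0 p1 g S P.

End Model.

(* Main.v *)
Require Import Defs.
From HB Require Import structures.
From mathcomp Require Import all_boot all_order all_algebra.
From mathcomp Require Import all_classical all_reals all_analysis.
Import Order.TTheory GRing.Theory Num.Theory.
Local Open Scope ring_scope.

From mathcomp Require Import ring lra.
Section S.
Variable R : realType.

Definition Vopt (p0 p1 g P : R) : R := Wbau p0 p1 - P * (Ebau p0 p1 - P / 2 * varrho p1 g).

Lemma tax_obj_id (p0 p1 g P q a : R) : 0 < p1 -> 0 < g ->
  tax_obj p0 p1 g P q a = Vopt p0 p1 g P
    - p1 / 2 * (q - (p0 - P) / p1) ^+ 2
    - g / 2 * ((1 - expR (- a)) * q - P / g) ^+ 2.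
Proof.
move=> h1 hg; rewrite /tax_obj /Vopt /raw_wealth /abate_cost /emissions /Wbau /Ebau /varrho.
have -> : expR (- a) * q = q - (1 - expR (-a)) * q by ring.
set x := (1 - expR (-a)) * q.
field; apply/andP; split; rewrite ?pnatr_eq0 //; [exact: lt0r_neq0 | exact: lt0r_neq0].
Qed.

Lemma tax_obj_le (p0 p1 g P q a : R) : 0 < p1 -> 0 < g -> tax_obj p0 p1 g P q a <= Vopt p0 p1 g P.
Proof.
move=> h1 hg; rewrite tax_obj_id //.
have h2 : 0 <= p1 / 2 * (q - (p0 - P) / p1) ^+ 2 by apply: mulr_ge0; [lra| exact: sqr_ge0].
have h3 : 0 <= g / 2 * ((1 - expR (- a)) * q - P / g) ^+ 2 by apply: mulr_ge0; [lra| exact: sqr_ge0].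
lra.
Qed.

Lemma tax_obj_eq (p0 p1 g P q a : R) : 0 < p1 -> 0 < g ->
  tax_obj p0 p1 g P q a = Vopt p0 p1 g P -> emissions q a = Ebau p0 p1 - P * varrho p1 g.
Proof.
move=> h1 hg; rewrite tax_obj_id // => h.
have h2 : 0 <= (q - (p0 - P) / p1) ^+ 2 by exact: sqr_ge0.
have h3 : 0 <= ((1 - expR (- a)) * q - P / g) ^+ 2 by exact: sqr_ge0.
have h2' : 0 <= p1 / 2 * (q - (p0 - P) / p1) ^+ 2 by apply: mulr_ge0; [lra| exact: sqr_ge0].
have h3' : 0 <= g / 2 * ((1 - expR (- a)) * q - P / g) ^+ 2 by apply: mulr_ge0; [lra| exact: sqr_ge0].
have e1 : p1 / 2 * (q - (p0 - P) / p1) ^+ 2 = 0 by lra.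
have e2 : g / 2 * ((1 - expR (- a)) * q - P / g) ^+ 2 = 0 by lra.
have {}e1 : q = (p0 - P) / p1.
  move/eqP: e1; rewrite mulf_eq0 => /orP [|]; first by rewrite mulf_eq0 invr_eq0 (gt_eqF h1) orFb; move/eqP; lra.
  by rewrite sqrf_eq0 subr_eq0 => /eqP.
have {}e2 : (1 - expR (- a)) * q = P / g.
  move/eqP: e2; rewrite mulf_eq0 => /orP [|]; first by rewrite mulf_eq0 invr_eq0 (gt_eqF hg) orFb; move/eqP; lra.
  by rewrite sqrf_eq0 subr_eq0 => /eqP.
rewrite /emissions /Ebau /varrho.
have -> : expR (- a) * q = q - (1 - expR (-a)) * q by ring.
rewrite e2 e1; field; apply/andP; split; [exact: lt0r_neq0 | exact: lt0r_neq0].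
Qed.

Lemma Vopt_gt0 (p0 p1 g P : R) : 0 < p1 -> 0 < g -> 0 < P -> 0 < Vopt p0 p1 g P.
Proof.
move=> h1 hg hP.
have -> : Vopt p0 p1 g P = (p0 - P) ^+ 2 / (2 * p1) + P ^+ 2 / (2 * g).
  rewrite /Vopt /Wbau /Ebau /varrho; field; apply/andP; split; [exact: lt0r_neq0 | exact: lt0r_neq0].
apply: ltr_wpDl; first by apply: divr_ge0; [exact: sqr_ge0| lra].
apply: divr_gt0; [exact: exprn_gt0 | lra].
Qed.

Lemma tax_witness (p0 p1 g P : R) : 0 < p1 -> 0 < g -> 0 < P -> P * varrho p1 g < Ebau p0 p1 ->
  exists q a, [/\ 0 < q, 0 <= a & tax_obj p0 p1 g P q a = Vopt p0 p1 g P].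
Proof.
move=> h1 hg hP hE.
set e := Ebau p0 p1 - P * varrho p1 g.
set q := (p0 - P) / p1.
have he : 0 < e by rewrite /e; lra.
have hqe : q = e + P / g by rewrite /q /e /Ebau /varrho; field; apply/andP; split; [exact: lt0r_neq0 | exact: lt0r_neq0].
have hPg : 0 < P / g by exact: divr_gt0.
have hq : 0 < q by lra.
exists q, (ln (q / e)); split => //.
  apply: ln_ge0; rewrite ler_pdivlMr //; lra.
apply/eqP; rewrite eq_le tax_obj_le //=.
rewrite tax_obj_id //.
have -> : expR (- ln (q / e)) = e / q.
  rewrite expRN lnK ?invf_div //; rewrite posrE; exact: divr_gt0.
have -> : (1 - e / q) * q - P / g = 0.
  rewrite mulrBl mul1r divfK ?gt_eqF // hqe; ring.
rewrite subrr expr0n /= mulr0 !subr0; lra.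
Qed.

Lemma tax_opt_exists (p0 p1 g P : R) : 0 < p1 -> 0 < g -> 0 < P -> P * varrho p1 g < Ebau p0 p1 ->
  exists q a, tax_optimal p0 p1 g P q a.
Proof.
move=> h1 hg hP hE; have [q [a [hq ha he]]] := tax_witness _ _ _ _ h1 hg hP hE.
exists q, a; split => //; first by rewrite he; exact: Vopt_gt0.
by move=> q' a' _ _ _; rewrite he; exact: tax_obj_le.
Qed.

Lemma tax_opt_char (p0 p1 g P q a : R) : 0 < p1 -> 0 < g -> 0 < P -> P * varrho p1 g < Ebau p0 p1 ->
  tax_optimal p0 p1 g P q a ->
  tax_obj p0 p1 g P q a = Vopt p0 p1 g P /\ emissions q a = Ebau p0 p1 - P * varrho p1 g.
Proof.
move=> h1 hg hP hE [hq ha hpos hmax].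
have [q' [a' [hq' ha' he']]] := tax_witness _ _ _ _ h1 hg hP hE.
have hV : tax_obj p0 p1 g P q a = Vopt p0 p1 g P.
  apply/eqP; rewrite eq_le tax_obj_le //= -he'; apply: hmax => //.
  by rewrite he'; exact: Vopt_gt0.
by split => //; exact: tax_obj_eq.
Qed.

Lemma mar_le_tax (p0 p1 g lam P q a d : R) : 0 <= P -> P <= lam -> 0 <= d ->
  mar_obj p0 p1 g lam P q a d <= tax_obj p0 p1 g P q a.
Proof.
move=> hP hl hd; rewrite /mar_obj /tax_obj.
set e := emissions q a.
suff : - (d * P) - lam * Num.max 0 (e - d) <= - (P * e) by lra.
case: (leP 0 (e - d)) => h.
  have : P * (e - d) <= lam * (e - d) by apply: ler_wpM2r.
  lra.
have : P * e <= P * d by apply: ler_wpM2l => //; lra.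
lra.
Qed.

Lemma mar_opt_exists (p0 p1 g lam P : R) : 0 < p1 -> 0 < g -> 0 < P -> P <= lam -> P * varrho p1 g < Ebau p0 p1 ->
  exists q a d, mar_optimal p0 p1 g lam P q a d.
Proof.
move=> h1 hg hP hl hE; have [q [a [hq ha he]]] := tax_witness _ _ _ _ h1 hg hP hE.
have hme : mar_obj p0 p1 g lam P q a (emissions q a) = Vopt p0 p1 g P.
  by rewrite -he /mar_obj /tax_obj subrr Order.POrderTheory.maxxx mulr0 subr0 mulrC.
exists q, a, (emissions q a); split => //.
- by rewrite /emissions; apply: mulr_ge0; [exact: expR_ge0 | lra].
- by rewrite hme; exact: Vopt_gt0.
- move=> q' a' d' _ _ hd' _; rewrite hme.
  apply: (le_trans (mar_le_tax p0 p1 g lam P q' a' d' (ltW hP) hl hd')); exact: tax_obj_le.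
Qed.

Lemma mar_opt_char (p0 p1 g lam P q a d : R) : 0 < p1 -> 0 < g -> 0 < P -> P <= lam -> P * varrho p1 g < Ebau p0 p1 ->
  mar_optimal p0 p1 g lam P q a d ->
  mar_obj p0 p1 g lam P q a d = Vopt p0 p1 g P /\ emissions q a = Ebau p0 p1 - P * varrho p1 g.
Proof.
move=> h1 hg hP hl hE [hq ha hd hpos hmax].
have [q' [a' [d' [hq' ha' hd' hpos' _]]]] := mar_opt_exists _ _ _ _ _ h1 hg hP hl hE.
have [q'' [a'' [hq'' ha'' he'']]] := tax_witness _ _ _ _ h1 hg hP hE.
have hme : mar_obj p0 p1 g lam P q'' a'' (emissions q'' a'') = Vopt p0 p1 g P.
  by rewrite -he'' /mar_obj /tax_obj subrr Order.POrderTheory.maxxx mulr0 subr0 mulrC.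
have hge : Vopt p0 p1 g P <= mar_obj p0 p1 g lam P q a d.
  rewrite -hme; apply: hmax => //.
    by rewrite /emissions; apply: mulr_ge0; [exact: expR_ge0 | lra].
  by rewrite hme; exact: Vopt_gt0.
have h1' := mar_le_tax p0 p1 g lam P q a d (ltW hP) hl hd.
have h2' := tax_obj_le p0 p1 g P q a h1 hg.
have hT : tax_obj p0 p1 g P q a = Vopt p0 p1 g P by lra.
split; first by lra.
exact: tax_obj_eq hT.
Qed.

End S.
Arguments tax_opt_exists {R p0 p1 g P}.
Arguments tax_opt_char {R p0 p1 g P q a}.
Arguments mar_opt_exists {R p0 p1 g lam P}.
Arguments mar_opt_char {R p0 p1 g lam P q a d}.
Arguments Vopt {R}.

Lemma sum_lin (R : realType) (N : nat) (F G H : 'I_N -> R) (c d : R) :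
  \sum_(i < N) (F i - c * (G i - d * H i)) = \sum_(i < N) F i - c * (\sum_(i < N) G i - d * \sum_(i < N) H i).
Proof. by rewrite sumrB -mulr_sumr sumrB -mulr_sumr. Qed.

Lemma sum_lin2 (R : realType) (N : nat) (F G : 'I_N -> R) (c d : R) :
  \sum_(i < N) (c * F i - d * G i) = c * \sum_(i < N) F i - d * \sum_(i < N) G i.
Proof. by rewrite sumrB -!mulr_sumr. Qed.

Lemma key_WC (R : realType) (E r Eb A rho W : R) : r != 0 -> rho != 0 ->
  let tau := (Eb - A) / rho in
  let P := tau / 2 + (E / r - A / rho) / 2 in
  let S := (Eb - 2 * A) / rho in
  W - P * (E - P / 2 * r) =
  (W - tau * (E - tau / 2 * r)) - 3 / 2 * ((E - P * r) * (P - S))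
  + A * r / rho * (E / r - Eb / rho + 3 * A / (2 * rho)).
Proof. move=> hr hrho tau P S; rewrite /P /tau /S; field; by rewrite hr hrho. Qed.

Theorem theorem3p1 (R : realType) (N : nat) (p0 p1 g : 'I_N -> R) (A lam tau : R) :
  (forall i, 0 < p0 i) -> (forall i, 0 < p1 i) -> (forall i, 0 < g i) ->
  0 < A -> 0 < lam -> 0 < tau ->
  (forall i, tau * varrho (p1 i) (g i) < Ebau (p0 i) (p1 i)) ->
  (forall i, lam * varrho (p1 i) (g i) < Ebau (p0 i) (p1 i)) ->
  (* aggregate tax emissions equal A *)
  (forall qt at_ : 'I_N -> R,
     (forall i, tax_optimal (p0 i) (p1 i) (g i) tau (qt i) (at_ i)) ->
     \sum_(i < N) emissions (qt i) (at_ i) = A) ->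
  let Eb := \sum_(i < N) Ebau (p0 i) (p1 i) in
  let Wb := \sum_(i < N) Wbau (p0 i) (p1 i) in
  let rho := \sum_(i < N) varrho (p1 i) (g i) in
  (* (1) tax scheme *)
  (tau = (Eb - A) / rho /\
   (forall i, exists q a, tax_optimal (p0 i) (p1 i) (g i) tau q a) /\
   (forall qt at_ : 'I_N -> R,
      (forall i, tax_optimal (p0 i) (p1 i) (g i) tau (qt i) (at_ i)) ->
      (forall i, tax_obj (p0 i) (p1 i) (g i) tau (qt i) (at_ i)
         = Wbau (p0 i) (p1 i)
           - tau * (Ebau (p0 i) (p1 i) - tau / 2 * varrho (p1 i) (g i))) /\
      \sum_(i < N) tax_obj (p0 i) (p1 i) (g i) tau (qt i) (at_ i)
         = Wb - tau * (Eb - tau / 2 * rho) /\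
      tau * \sum_(i < N) emissions (qt i) (at_ i) = tau * A)) /\
  (* (2) spot market scheme *)
  (Eb - lam * rho <= A < Eb ->
   forall S : R, A = \sum_(i < N) demand (p0 i) (p1 i) (g i) S ->
   (forall i, exists q a d, mar_optimal (p0 i) (p1 i) (g i) lam S q a d) /\
   (forall qm am dm : 'I_N -> R,
      (forall i, mar_optimal (p0 i) (p1 i) (g i) lam S (qm i) (am i) (dm i)) ->
    forall qt at_ : 'I_N -> R,
      (forall i, tax_optimal (p0 i) (p1 i) (g i) tau (qt i) (at_ i)) ->
      (forall i, mar_obj (p0 i) (p1 i) (g i) lam S (qm i) (am i) (dm i)
                 = tax_obj (p0 i) (p1 i) (g i) tau (qt i) (at_ i)) /\
      \sum_(i < N) mar_obj (p0 i) (p1 i) (g i) lam S (qm i) (am i) (dm i)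
        = \sum_(i < N) tax_obj (p0 i) (p1 i) (g i) tau (qt i) (at_ i) /\
      lam * \sum_(i < N) Num.max 0 (emissions (qm i) (am i)
                                    - demand (p0 i) (p1 i) (g i) S) + S * A
        = tau * \sum_(i < N) emissions (qt i) (at_ i))) /\
  (* (3) purely intermediated market scheme *)
  ((Eb + rho * (\big[Num.max/0]_(i < N) (Ebau (p0 i) (p1 i) / varrho (p1 i) (g i))
                - 2 * lam)) / 2 <= A <
     \sum_(i < N) Num.max (Ebau (p0 i) (p1 i) / 2)
                          (Ebau (p0 i) (p1 i) - lam * varrho (p1 i) (g i)) ->
   exists (S : R) (P : 'I_N -> R),
     0 < S /\
     (forall i, interm_optimal (p0 i) (p1 i) (g i) lam S (P i)) /\
     A = \sum_(i < N) demand (p0 i) (p1 i) (g i) (P i) /\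
     (forall i, P i = tau / 2
        + (Ebau (p0 i) (p1 i) / varrho (p1 i) (g i) - A / rho) / 2) /\
     (forall i, exists q a d, mar_optimal (p0 i) (p1 i) (g i) lam (P i) q a d) /\
     (forall qm am dm : 'I_N -> R,
        (forall i, mar_optimal (p0 i) (p1 i) (g i) lam (P i) (qm i) (am i) (dm i)) ->
      forall qt at_ : 'I_N -> R,
        (forall i, tax_optimal (p0 i) (p1 i) (g i) tau (qt i) (at_ i)) ->
      let Em := fun i => emissions (qm i) (am i) in
      let WF := fun i => demand (p0 i) (p1 i) (g i) (P i) * (P i - S) in
      let WC := fun i => mar_obj (p0 i) (p1 i) (g i) lam (P i) (qm i) (am i) (dm i) in
      let WT := fun i => tax_obj (p0 i) (p1 i) (g i) tau (qt i) (at_ i) in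
      (forall i,
         WF i = Em i ^+ 2 / varrho (p1 i) (g i) /\
         WF i = varrho (p1 i) (g i) / 4 *
                (Ebau (p0 i) (p1 i) / varrho (p1 i) (g i) - Eb / rho + 2 * A / rho) ^+ 2 /\
         WC i = WT i - 3 / 2 * WF i
                + A * varrho (p1 i) (g i) / rho *
                  (Ebau (p0 i) (p1 i) / varrho (p1 i) (g i) - Eb / rho
                   + 3 * A / (2 * rho))) /\
      \sum_(i < N) WF i = \sum_(i < N) Em i ^+ 2 / varrho (p1 i) (g i) /\
      \sum_(i < N) WC i = \sum_(i < N) WT i - 3 / 2 * \sum_(i < N) WF i
                          + 3 / (2 * rho) * A ^+ 2 /\
      lam * \sum_(i < N) Num.max 0 (Em i - demand (p0 i) (p1 i) (g i) (P i)) + S * A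
        = tau * \sum_(i < N) emissions (qt i) (at_ i) - A ^+ 2 / rho)).
Proof.
move=> hp0 hp1 hg hA hlam htau htauE hlamE hsumA Eb Wb rho.
have hr : forall i, 0 < varrho (p1 i) (g i).
  by move=> i; rewrite /varrho; apply: addr_gt0; rewrite invr_gt0.
have [qt0 ht0] : exists qt : 'I_N -> R * R,
    forall i, tax_optimal (p0 i) (p1 i) (g i) tau (qt i).1 (qt i).2.
  have H : forall i, exists qa : R * R, tax_optimal (p0 i) (p1 i) (g i) tau qa.1 qa.2.
    by move=> i; have [q [a h]] := tax_opt_exists (hp1 i) (hg i) htau (htauE i); exists (q, a).
  by case: (boolp.choice H) => f hf; exists f.
have hA' : A = Eb - tau * rho.
  rewrite -(hsumA (fun i => (qt0 i).1) (fun i => (qt0 i).2) ht0).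
  rewrite /Eb /rho mulr_sumr -sumrB; apply: eq_bigr => i _.
  exact: (tax_opt_char (hp1 i) (hg i) htau (htauE i) (ht0 i)).2.
have hrho : 0 < rho.
  case: (ltnP 0 N) => HN.
    rewrite /rho (bigD1 (Ordinal HN)) //=; apply: ltr_wpDr; last exact: hr.
    by apply: sumr_ge0 => i _; exact: ltW.
  have e0 : forall F : 'I_N -> R, \sum_(i < N) F i = 0.
    by move=> F; apply: big1 => -[i hi] _; have := leq_trans hi HN.
  by move: hA; rewrite hA' /Eb /rho !e0; lra.
have hrho0 : rho != 0 by exact: lt0r_neq0.
have htauv : tau = (Eb - A) / rho by rewrite hA'; field.
have hdem : forall S, \sum_(i < N) demand (p0 i) (p1 i) (g i) S = Eb - S * rho.
  by move=> S; rewrite /demand sumrB -mulr_sumr.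
split.
  split => //; split.
    by move=> i; exact: tax_opt_exists (hp1 i) (hg i) htau (htauE i).
  move=> qt at_ ht.
  have hWT : forall i, tax_obj (p0 i) (p1 i) (g i) tau (qt i) (at_ i)
      = Wbau (p0 i) (p1 i) - tau * (Ebau (p0 i) (p1 i) - tau / 2 * varrho (p1 i) (g i)).
    by move=> i; exact: (tax_opt_char (hp1 i) (hg i) htau (htauE i) (ht i)).1.
  split => //; split; last by rewrite hsumA.
  by rewrite (eq_bigr _ (fun i _ => hWT i)) sum_lin.
split.
  move=> /andP [hlo hhi] S hS.
  have hSt : S = tau.
    apply: (mulIf hrho0); move: hS; rewrite hdem hA'; lra.
  subst S.
  have htl : tau <= lam.
    by rewrite -(ler_pM2r hrho); move: hlo; rewrite hA'; lra.
  split.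
    by move=> i; exact: mar_opt_exists (hp1 i) (hg i) htau htl (htauE i).
  move=> qm am dm hm qt at_ ht.
  have hWC : forall i, mar_obj (p0 i) (p1 i) (g i) lam tau (qm i) (am i) (dm i)
      = tax_obj (p0 i) (p1 i) (g i) tau (qt i) (at_ i).
    move=> i; rewrite (mar_opt_char (hp1 i) (hg i) htau htl (htauE i) (hm i)).1.
    by rewrite (tax_opt_char (hp1 i) (hg i) htau (htauE i) (ht i)).1.
  split => //; split; first by apply: eq_bigr => i _.
  rewrite big1 ?mulr0 ?add0r; first by rewrite hsumA // mulrC.
  move=> i _; rewrite (mar_opt_char (hp1 i) (hg i) htau htl (htauE i) (hm i)).2 /demand.
  by rewrite subrr Order.POrderTheory.maxxx.
move=> /andP [hlo hhi].
set e := fun i => Ebau (p0 i) (p1 i) / varrho (p1 i) (g i).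
set m := \big[Num.max/0]_(i < N) e i.
have {}hlo : (Eb + rho * (m - 2 * lam)) / 2 <= A by exact: hlo.
have hEe : forall i, Ebau (p0 i) (p1 i) = e i * varrho (p1 i) (g i).
  by move=> i; rewrite /e divfK // lt0r_neq0.
have hel : forall i, lam < e i.
  by move=> i; rewrite /e ltr_pdivlMr.
have hem : forall i, e i <= m by move=> i; exact: le_bigmax.
set S := (Eb - 2 * A) / rho.
have hSm : S <= 2 * lam - m.
  rewrite /S ler_pdivrMr //; move: hlo; nra.
have hA2 : 2 * A < Eb.
  set M := Num.max 0 (m / 2 - lam).
  have hM0 : 0 <= M by rewrite /M le_max lexx.
  have hM1 : m / 2 - lam <= M by rewrite /M le_max lexx orbT.
  have hU : \sum_(i < N) Num.max (Ebau (p0 i) (p1 i) / 2)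
                          (Ebau (p0 i) (p1 i) - lam * varrho (p1 i) (g i))
            <= \sum_(i < N) (Ebau (p0 i) (p1 i) / 2 + M * varrho (p1 i) (g i)).
    apply: ler_sum => i _; rewrite ge_max; apply/andP; split.
      have : 0 <= M * varrho (p1 i) (g i) by apply: mulr_ge0 => //; exact: ltW.
      lra.
    have k : (e i / 2 - lam) * varrho (p1 i) (g i) <= M * varrho (p1 i) (g i).
      apply: ler_wpM2r; [exact: ltW | have := hem i; lra].
    rewrite hEe; lra.
  rewrite big_split /= -mulr_suml -mulr_sumr -/Eb -/rho in hU.
  case: (leP 0 (m / 2 - lam)) => hc.
    have : M = m / 2 - lam by rewrite /M max_r.
    move=> hMe; rewrite hMe in hU.
    have : rho * (m / 2 - lam) = rho * (m - 2 * lam) / 2 by field.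
    lra.
  have : M = 0 by rewrite /M max_l // ltW.
  move=> hMe; rewrite hMe mul0r in hU; lra.
have hS0 : 0 < S by rewrite /S; apply: divr_gt0 => //; lra.
set P := fun i => tau / 2 + (Ebau (p0 i) (p1 i) / varrho (p1 i) (g i) - A / rho) / 2.
have hP : forall i, P i = (e i + S) / 2.
  by move=> i; rewrite /P /e /S /= htauv; field; rewrite ?hrho0 ?(lt0r_neq0 (hr i)).
have hPl : forall i, P i <= lam.
  by move=> i; rewrite hP; have := hem i; lra.
have hSP : forall i, S < P i.
  by move=> i; rewrite hP; have := hem i; have := hel i; lra.
have hP0 : forall i, 0 < P i by move=> i; exact: lt_trans (hSP i).
have hPE : forall i, P i * varrho (p1 i) (g i) < Ebau (p0 i) (p1 i).
  move=> i; apply: le_lt_trans (hlamE i); apply: ler_wpM2r; [exact: ltW | exact: hPl].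
have hdemP : forall i, demand (p0 i) (p1 i) (g i) (P i)
    = (Ebau (p0 i) (p1 i) - S * varrho (p1 i) (g i)) / 2.
  by move=> i; rewrite /demand hP hEe; field.
exists S, P; split => //; split.
  move=> i; split; first by rewrite (ltW (hSP i)) hPl.
  move=> P' _; rewrite /interm_obj /demand hEe hP.
  have : 0 <= varrho (p1 i) (g i) * ((e i + S) / 2 - P') ^+ 2.
    by apply: mulr_ge0; [exact: ltW | exact: sqr_ge0].
  nra.
split.
  rewrite (eq_bigr _ (fun i _ => hdemP i)) -mulr_suml sumrB -mulr_sumr -/Eb -/rho /S; field; exact: hrho0.
split; first by [].
split.
  by move=> i; exact: mar_opt_exists (hp1 i) (hg i) (hP0 i) (hPl i) (hPE i).
move=> qm am dm hm qt at_ ht Em WF WC WT.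
have hEm : forall i, Em i = Ebau (p0 i) (p1 i) - P i * varrho (p1 i) (g i).
  by move=> i; exact: (mar_opt_char (hp1 i) (hg i) (hP0 i) (hPl i) (hPE i) (hm i)).2.
have hWCv : forall i, WC i = Vopt (p0 i) (p1 i) (g i) (P i).
  by move=> i; exact: (mar_opt_char (hp1 i) (hg i) (hP0 i) (hPl i) (hPE i) (hm i)).1.
have hWTv : forall i, WT i = Vopt (p0 i) (p1 i) (g i) tau.
  by move=> i; exact: (tax_opt_char (hp1 i) (hg i) htau (htauE i) (ht i)).1.
have hri : forall i, varrho (p1 i) (g i) != 0 by move=> i; exact: lt0r_neq0.
have hWFa : forall i, WF i = Em i ^+ 2 / varrho (p1 i) (g i).
  move=> i; rewrite hEm /WF /demand hP hEe; field; exact: hri.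
have hWCi : forall i, WC i = WT i - 3 / 2 * WF i
                + A * varrho (p1 i) (g i) / rho *
                  (Ebau (p0 i) (p1 i) / varrho (p1 i) (g i) - Eb / rho
                   + 3 * A / (2 * rho)).
  move=> i; rewrite hWCv hWTv /WF /Vopt /P htauv /demand.
  exact: key_WC (hri i) hrho0.
split.
  move=> i; split; first exact: hWFa.
  split; last exact: hWCi.
  by rewrite /WF /demand hP hEe /S; field; rewrite ?hrho0 ?hri.
split; first by apply: eq_bigr => i _; exact: hWFa.
split.
  rewrite (eq_bigr _ (fun i _ => hWCi i)) big_split /= sumrB -mulr_sumr.
  have -> : \sum_(i < N) (A * varrho (p1 i) (g i) / rho *
       (Ebau (p0 i) (p1 i) / varrho (p1 i) (g i) - Eb / rho + 3 * A / (2 * rho)))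
     = \sum_(i < N) (A / rho * Ebau (p0 i) (p1 i) - (A / rho * (Eb / rho - 3 * A / (2 * rho))) * varrho (p1 i) (g i)).
    by apply: eq_bigr => i _; field; rewrite hri hrho0.
  by rewrite sum_lin2 -/Eb -/rho; field.

rewrite big1 ?mulr0 ?add0r.
  by rewrite hsumA // /S htauv; field.
move=> i _; rewrite hEm /demand subrr.
by rewrite Order.POrderTheory.maxxx.
Qed.
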